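(* Let $S=K[x_1,\dots,x_n]$ with $K$ an $F$-finite field of prime characteristic $p$, $I\subseteq S$ a squarefree monomial ideal, and $R=S/I$. If $J$ is a monomial ideal of $R$ and $e\in\mathbb N$, then $J_e$ and $\mathcal P(J)$ are monomial ideals of $R$.
   Context: A monomial ideal of $R$ is one generated by images of monomials. $J_e=\{f\in R\mid \varphi(f^{1/p^e})\in J \text{ for all }\varphi\in\operatorname{Hom}_R(R^{1/p^e},R)\}$ and $\mathcal P(J)=\bigcap_{s\in\mathbb N}J_s$ (Cartier core). *)

(* Defs.v *)
From HB Require Import structures.
From mathcomp Require Import all_boot all_order all_algebra.
From mathcomp Require Import mpoly.
Set Implicit Arguments. Unset Strict Implicit. Unset Printing Implicit Defensive.
Import Order.TTheory GRing.Theory.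
Local Open Scope ring_scope.

Definition is_ideal (R : comPzRingType) (J : R -> Prop) : Prop :=
  [/\ J 0, (forall a b, J a -> J b -> J (a + b)) & (forall r a, J a -> J (r * a))].

Definition ideal_gen (R : comPzRingType) (G : R -> Prop) : R -> Prop :=
  fun f => exists (k : nat) (r g : 'I_k -> R),
    (forall i, G (g i)) /\ f = \sum_(i < k) r i * g i.

(* K is F-finite (of characteristic p): K is a finitely generated module over K^p,
   i.e. there are b_1..b_k with every x = sum c_i^p b_i. *)
Definition F_finite (K : fieldType) (p : nat) : Prop :=
  exists (k : nat) (b : 'I_k -> K), forall x : K,
    exists c : 'I_k -> K, x = \sum_(i < k) (c i) ^+ p * b i.

Definition squarefree_mon (n : nat) (m : 'X_{1..n}) : Prop := forall i, (m i <= 1)%N.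

Definition squarefree_monomial_ideal (K : fieldType) (n : nat)
    (I : {mpoly K[n]} -> Prop) : Prop :=
  exists M : 'X_{1..n} -> Prop, (forall m, M m -> squarefree_mon m) /\
    forall f, I f <-> ideal_gen (fun g => exists m, M m /\ g = 'X_[m]) f.

Definition monomial_ideal_of (K : fieldType) (n : nat) (R : comPzRingType)
    (pi : {mpoly K[n]} -> R) (J : R -> Prop) : Prop :=
  exists M : 'X_{1..n} -> Prop,
    forall f, J f <-> ideal_gen (fun g => exists m, M m /\ g = pi 'X_[m]) f.

(* phi is an element of Hom_R(R^{1/p^e}, R): an additive map R -> R (R^{1/p^e}
   identified with R) with phi (r^{p^e} s) = r phi(s), i.e. R-linear for the
   Frobenius-twisted module structure. *)
Definition p_e_linear (R : comPzRingType) (p e : nat) (phi : R -> R) : Prop :=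
  (forall a b, phi (a + b) = phi a + phi b) /\
  (forall r s, phi (r ^+ (p ^ e) * s) = r * phi s).

Definition J_e (R : comPzRingType) (p : nat) (J : R -> Prop) (e : nat) : R -> Prop :=
  fun f => forall phi : R -> R, p_e_linear p e phi -> J (phi f).

Definition cartier_core (R : comPzRingType) (p : nat) (J : R -> Prop) : R -> Prop :=
  fun f => forall s : nat, J_e p J s f.

(* Main.v *)
Require Import Defs.
From HB Require Import structures.
From mathcomp Require Import all_boot all_order all_algebra.
From mathcomp Require Import mpoly.
From Stdlib Require Import ClassicalEpsilon.
From mathcomp Require Import zify.
Set Implicit Arguments. Unset Strict Implicit. Unset Printing Implicit Defensive.
Import Order.TTheory GRing.Theory.
Local Open Scope ring_scope.

Section MP.
Variables (K : fieldType) (n : nat).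
Implicit Types (g h : {mpoly K[n]}) (a m : 'X_{1..n}).

Definition Cm a g : {mpoly K[n]} := g@_a *: 'X_[a].

Lemma mcoeffMX_gen g m a :
  (g * 'X_[m])@_a = if (m <= a)%MM then g@_(a - m)%MM else 0.
Proof.
case: ifP => h; first by rewrite -[RHS](mcoeffMX g m) addmC submK.
apply/eqP; rewrite mcoeff_eq0; apply/negP => H.
move: H; rewrite (perm_mem (msuppMX g m)) => /mapP [m' _ am].
by rewrite am lem_addr in h.
Qed.

Lemma CmD a : {morph Cm a : x y / x + y}.
Proof. by move=> x y; rewrite /Cm mcoeffD scalerDl. Qed.
Lemma CmB a g h : Cm a (g - h) = Cm a g - Cm a h.
Proof. by rewrite /Cm mcoeffB scalerBl. Qed.
Lemma Cm0 a : Cm a 0 = 0.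
Proof. by rewrite /Cm mcoeff0 scale0r. Qed.
Lemma CmZ a c g : Cm a (c *: g) = c *: Cm a g.
Proof. by rewrite /Cm mcoeffZ scalerA. Qed.

Lemma CmMX a g m :
  Cm a (g * 'X_[m]) = if (m <= a)%MM then Cm (a - m)%MM g * 'X_[m] else 0.
Proof.
rewrite /Cm mcoeffMX_gen; case: ifP => h; last by rewrite scale0r.
by rewrite -scalerAl -mpolyXD submK.
Qed.

Lemma CmMZX a g c m :
  Cm a (g * (c *: 'X_[m])) = if (m <= a)%MM then Cm (a - m)%MM g * (c *: 'X_[m]) else 0.
Proof.
rewrite -scalerAr CmZ CmMX; case: ifP => _; last by rewrite scaler0.
by rewrite scalerAr.
Qed.

Lemma CmCm a b g : Cm a (Cm b g) = if a == b then Cm b g else 0.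
Proof.
rewrite /Cm mcoeffZ mcoeffX eq_sym; case: eqP => [->|_]; first by rewrite mulr1.
by rewrite mulr0 scale0r.
Qed.

Lemma Cm_sum g : g = \sum_(a <- msupp g) Cm a g.
Proof. exact: mpolyE. Qed.

Lemma Cm_supp a g : Cm a g != 0 -> a \in msupp g.
Proof. by rewrite mcoeff_msupp /Cm; apply: contraNneq => ->; rewrite scale0r. Qed.

End MP.

Section RP.
Variables (K : fieldType) (n : nat) (R : comPzRingType)
  (pi : {rmorphism {mpoly K[n]} -> R}).
Hypothesis HC : forall a h, pi h = 0 -> pi (Cm a h) = 0.
Variable lift : R -> {mpoly K[n]}.
Hypothesis hlift : forall r, pi (lift r) = r.
Implicit Types (x y r : R) (a m : 'X_{1..n}).

Definition P a r := pi (Cm a (lift r)).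

Lemma P_pi a g : P a (pi g) = pi (Cm a g).
Proof.
apply/eqP; rewrite -subr_eq0 -rmorphB -CmB; apply/eqP/HC.
by rewrite rmorphB hlift subrr.
Qed.

Lemma PD a x y : P a (x + y) = P a x + P a y.
Proof. by rewrite -[x]hlift -[y]hlift -rmorphD !P_pi CmD rmorphD. Qed.
Lemma P0 a : P a 0 = 0.
Proof. by rewrite -(rmorph0 pi) P_pi Cm0 rmorph0. Qed.
Lemma PN a x : P a (- x) = - P a x.
Proof. by apply/eqP; rewrite -subr_eq0 opprK -PD addNr P0. Qed.
Lemma PB a x y : P a (x - y) = P a x - P a y.
Proof. by rewrite PD PN. Qed.
Lemma P_sum a (I : Type) (s : seq I) (Q : pred I) (f : I -> R) :
  P a (\sum_(i <- s | Q i) f i) = \sum_(i <- s | Q i) P a (f i).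
Proof. exact: (big_morph _ (PD a) (P0 a)). Qed.

Lemma PMZX a r c m :
  P a (r * pi (c *: 'X_[m])) = if (m <= a)%MM then P (a - m)%MM r * pi (c *: 'X_[m]) else 0.
Proof.
rewrite -[r]hlift -(rmorphM pi (lift r)) P_pi CmMZX; case: ifP => _; last by rewrite rmorph0.
by rewrite rmorphM P_pi.
Qed.

Lemma PMX a r m :
  P a (r * pi 'X_[m]) = if (m <= a)%MM then P (a - m)%MM r * pi 'X_[m] else 0.
Proof. by have := PMZX a r 1 m; rewrite scale1r. Qed.

Lemma PP a b r : P a (P b r) = if a == b then P b r else 0.
Proof.
have -> : P b r = pi (Cm b (lift r)) by [].
by rewrite P_pi CmCm; case: eqP => _ //; rewrite rmorph0.
Qed.

Lemma P_decomp r : r = \sum_(a <- msupp (lift r)) P a r.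
Proof. by rewrite -{1}[r]hlift {1}(Cm_sum (lift r)) rmorph_sum. Qed.

Lemma P_ext x y : (forall a, P a x = P a y) -> x = y.
Proof.
move=> H; apply/eqP; rewrite -subr_eq0; apply/eqP.
by rewrite (P_decomp (x - y)) big1 // => a _; rewrite PB H subrr.
Qed.

Lemma P_supp a r : P a r != 0 -> a \in msupp (lift r).
Proof.
move=> H; apply: Cm_supp; apply/negP => /eqP E; move: H.
by rewrite /P E rmorph0 eqxx.
Qed.

Lemma P_form a r : P a r = pi ((lift r)@_a)%:MP * pi 'X_[a].
Proof. by rewrite /P /Cm -mul_mpolyC rmorphM. Qed.

Lemma glue (F : 'X_{1..n} -> R) (T : seq 'X_{1..n}) :
  (forall b, b \notin T -> F b = 0) ->
  (forall a b, P a (F b) = if a == b then F b else 0) ->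
  exists r, forall b, P b r = F b.
Proof.
move=> hF hFP; exists (\sum_(b <- undup T) F b) => b.
rewrite P_sum; under eq_bigr do rewrite hFP.
case: (boolP (b \in T)) => bT.
  rewrite (bigD1_seq b) ?mem_undup ?undup_uniq //= eqxx big1 ?addr0 // => j.
  by rewrite eq_sym => /negbTE ->.
rewrite hF // big1 // => j _; case: eqP => // <-; exact: hF.
Qed.

End RP.

Section Psi.
Variables (K : fieldType) (n : nat) (R : comPzRingType)
  (pi : {rmorphism {mpoly K[n]} -> R}).
Hypothesis HC : forall a h, pi h = 0 -> pi (Cm a h) = 0.
Variable lift : R -> {mpoly K[n]}.
Hypothesis hlift : forall r, pi (lift r) = r.
Variables (p e : nat) (phi : R -> R).
Hypothesis hphi : p_e_linear p e phi.
Hypothesis hp0 : (0 < p)%N.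
Hypothesis hS : [pchar {mpoly K[n]}].-nat (p ^ e)%N.
Variables (a b : 'X_{1..n}).
Local Notation q := (p ^ e)%N.
Local Notation P := (P pi lift).
Local Notation PD := (PD HC hlift).
Local Notation P0 := (P0 HC hlift).
Local Notation PP := (PP HC hlift).
Local Notation PMZX := (PMZX HC hlift).
Local Notation P_ext := (P_ext HC hlift).

Lemma phiD x y : phi (x + y) = phi x + phi y.
Proof. by case: hphi. Qed.
Lemma phi0 : phi 0 = 0.
Proof. by apply: (addrI (phi 0)); rewrite -phiD !addr0. Qed.
Lemma phiL r s : phi (r ^+ q * s) = r * phi s.
Proof. by case: hphi. Qed.

Lemma q_gt0 : (0 < q)%N. Proof. by rewrite expn_gt0 hp0. Qed.

Definition cond (b' : 'X_{1..n}) := (b *+ q <= a + b' *+ q)%MM.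
Definition cc (b' : 'X_{1..n}) := (a + b' *+ q - b *+ q)%MM.
Definition Fp s b' := if cond b' then P b' (phi (P (cc b') s)) else 0.
Definition Tp s := [seq [multinom ((c i + b i * q - a i) %/ q)%N | i < n] | c : 'X_{1..n} <- msupp (lift s)].

Lemma Fp_supp s b' : b' \notin Tp s -> Fp s b' = 0.
Proof.
move=> H; rewrite /Fp; case: ifP => hc //.
case: (eqVneq (P (cc b') s) 0) => [->|hne]; first by rewrite phi0 P0.
have := P_supp hne => hin; case/negP: H; apply/mapP; exists (cc b') => //.
apply/mnmP => i; rewrite mnmE /cc mnmBE mnmDE !mulmnE.
have := mnm_lepP hc i; rewrite mnmDE !mulmnE => hi.
have -> : (a i + b' i * q - b i * q + b i * q - a i = b' i * q)%N by lia.
by rewrite mulnK // q_gt0.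
Qed.

Lemma Fp_P s a' b' : P a' (Fp s b') = if a' == b' then Fp s b' else 0.
Proof.
rewrite /Fp; case: ifP => _; first exact: PP.
by rewrite P0; case: (a' == b').
Qed.

Definition psi s := proj1_sig (constructive_indefinite_description _
   (glue HC hlift (@Fp_supp s) (@Fp_P s))).

Lemma P_psi s b' : P b' (psi s) = Fp s b'.
Proof. exact: (proj2_sig (constructive_indefinite_description _
   (glue HC hlift (@Fp_supp s) (@Fp_P s)))). Qed.

Lemma psiD s t : psi (s + t) = psi s + psi t.
Proof.
apply: P_ext => b'; rewrite PD !P_psi /Fp; case: ifP => _; last by rewrite addr0.
by rewrite PD phiD PD.
Qed.

Lemma psi0 : psi 0 = 0.
Proof. by apply: (addrI (psi 0)); rewrite -psiD !addr0. Qed.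

Lemma arith u b' : (u <= b')%MM ->
  (cond b' && (u *+ q <= cc b')%MM) = cond (b' - u)%MM /\
  (cc b' - u *+ q)%MM = cc (b' - u)%MM.
Proof.
move=> /mnm_lepP hu; rewrite /cond /cc; split.
  apply/andP/mnm_lepP => [[/mnm_lepP h1 /mnm_lepP h2] i | h].
    have := h1 i; have := h2 i; have := hu i; have := leq_mul (hu i) (leqnn q).
    rewrite !(mnmBE, mnmDE, mulmnE) mulnBl; lia.
  split; apply/mnm_lepP => i; have := h i; have := hu i;
    have := leq_mul (hu i) (leqnn q);
    rewrite !(mnmBE, mnmDE, mulmnE) ?mulnBl; lia.
apply/mnmP => i; have := hu i; have := leq_mul (hu i) (leqnn q).
rewrite !(mnmBE, mnmDE, mulmnE) mulnBl; lia.
Qed.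

Lemma psi_lin r s : psi (r ^+ q * s) = r * psi s.
Proof.
rewrite -[r]hlift; move: (lift r) s => g.
rewrite (Cm_sum g).
elim/big_ind: _ => [s| x y IHx IHy s | m _ s].
- by rewrite rmorph0 expr0n /= eqn0Ngt q_gt0 !mul0r psi0.
- by rewrite -rmorphXn exprDn_pchar // !rmorphD !rmorphXn mulrDl psiD IHx IHy mulrDl.
rewrite /Cm; set c := g@_m.
have Hr : pi (c *: 'X_[m]) ^+ q = pi (c ^+ q *: 'X_[m *+ q]).
  by rewrite -rmorphXn exprZn mpolyXn.
apply: P_ext => b'; rewrite P_psi /Fp [in RHS]mulrC PMZX [in LHS]Hr (mulrC _ s) PMZX.
case Hm: (m <= b')%MM.
  rewrite P_psi /Fp; have [H1 H2] := arith Hm.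
  rewrite -H1 -H2; case: (cond b') => /=; last by rewrite mul0r.
  case: (m *+ q <= cc b')%MM; last by rewrite phi0 P0 mul0r.
  by rewrite (mulrC (P _ s)) -Hr phiL (mulrC (pi _)) PMZX Hm.
case: (cond b') => //; case: (m *+ q <= cc b')%MM; last by rewrite phi0 P0.
by rewrite (mulrC (P _ s)) -Hr phiL (mulrC (pi _)) PMZX Hm.
Qed.

Lemma psi_linear : p_e_linear p e psi.
Proof. by split; [exact: psiD | exact: psi_lin]. Qed.

Lemma P_psi_diag s : P b (psi s) = P b (phi (P a s)).
Proof.
rewrite P_psi /Fp /cond /cc; have -> : (a + b *+ q - b *+ q)%MM = a.
  by apply/mnmP => i; rewrite !(mnmBE, mnmDE, mulmnE) addnK.
by rewrite lem_addl.
Qed.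

End Psi.

Section IG.
Variable A : comPzRingType.
Implicit Types (G : A -> Prop).

Lemma ig0 G : ideal_gen G 0.
Proof. by exists 0%N, (fun _ => 0), (fun _ => 0); split => [[]|]; rewrite ?big_ord0. Qed.

Lemma igD G x y : ideal_gen G x -> ideal_gen G y -> ideal_gen G (x + y).
Proof.
move=> [k1 [r1 [g1 [H1 ->]]]] [k2 [r2 [g2 [H2 ->]]]].
exists (k1 + k2)%N, (fun i => match split i with inl j => r1 j | inr j => r2 j end),
  (fun i => match split i with inl j => g1 j | inr j => g2 j end); split.
  by move=> i; case: (split i).
by rewrite big_split_ord /=; congr (_ + _); apply: eq_bigr => i _;
  rewrite ?(unsplitK (inl _ : 'I_k1 + 'I_k2)) ?(unsplitK (inr _ : 'I_k1 + 'I_k2)).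
Qed.

Lemma igG G r g : G g -> ideal_gen G (r * g).
Proof.
move=> Hg; exists 1%N, (fun _ => r), (fun _ => g); split => //.
by rewrite big_ord1.
Qed.

Lemma ig_sum G (I : Type) (s : seq I) (Q : pred I) (f : I -> A) :
  (forall i, Q i -> ideal_gen G (f i)) -> ideal_gen G (\sum_(i <- s | Q i) f i).
Proof. by move=> H; apply: big_ind => //; [exact: ig0 | exact: igD]. Qed.

Lemma igM G r x : ideal_gen G x -> ideal_gen G (r * x).
Proof.
move=> [k [r1 [g [H ->]]]]; rewrite mulr_sumr; apply: ig_sum => i _.
by rewrite mulrA; apply: igG.
Qed.

Lemma ig_ind G (L : A -> Prop) : L 0 -> (forall x y, L x -> L y -> L (x + y)) ->
  (forall r g, G g -> L (r * g)) -> forall x, ideal_gen G x -> L x.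
Proof.
move=> L0 LD LG x [k [r [g [H ->]]]].
by apply: big_ind => // i _; apply: LG.
Qed.

End IG.

Lemma pel0 (A : comPzRingType) p e (phi : A -> A) : p_e_linear p e phi -> phi 0 = 0.
Proof. by case=> hD _; apply: (addrI (phi 0)); rewrite -hD !addr0. Qed.

Section Main.
Variables (K : fieldType) (n : nat) (R : comPzRingType)
  (pi : {rmorphism {mpoly K[n]} -> R}).
Hypothesis HC : forall a h, pi h = 0 -> pi (Cm a h) = 0.
Variable lift : R -> {mpoly K[n]}.
Hypothesis hlift : forall r, pi (lift r) = r.
Local Notation P := (P pi lift).

Lemma generic_mon (L : R -> Prop) : L 0 -> (forall x y, L x -> L y -> L (x + y)) ->
  (forall r x, L x -> L (r * x)) -> (forall a x, L x -> L (P a x)) ->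
  monomial_ideal_of pi L.
Proof.
move=> L0 LD LM LP; exists (fun m => L (pi 'X_[m])) => f; split.
  move=> Lf; rewrite (P_decomp hlift f); apply: ig_sum => a _.
  rewrite P_form; set c := (lift f)@_a.
  case: (eqVneq c 0) => [->|nz]; first by rewrite mpolyC0 rmorph0 mul0r; apply: ig0.
  apply: igG; exists a; split => //.
  have := LM (pi (c^-1)%:MP) _ (LP a _ Lf); rewrite P_form mulrA -rmorphM -mpolyCM.
  by rewrite mulVf // mpolyC1 rmorph1 mul1r.
apply: ig_ind => // r g [m [Lm ->]]; exact: LM.
Qed.

Variable J : R -> Prop.
Variable MJ : 'X_{1..n} -> Prop.
Hypothesis hJ : forall f, J f <-> ideal_gen (fun g => exists m, MJ m /\ g = pi 'X_[m]) f.

Lemma J0 : J 0. Proof. by apply/hJ/ig0. Qed.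
Lemma JD x y : J x -> J y -> J (x + y).
Proof. by move=> /hJ Hx /hJ Hy; apply/hJ/igD. Qed.
Lemma JP a x : J x -> J (P a x).
Proof.
move=> /hJ [k [r [g [H ->]]]]; apply/hJ; rewrite (P_sum HC hlift); apply: ig_sum => i _.
have [m [Mm ->]] := H i; rewrite (PMX HC hlift); case: ifP => _; last exact: ig0.
by apply: igG; exists m.
Qed.
Lemma J_comp y : (forall b, J (P b y)) -> J y.
Proof.
move=> H; rewrite (P_decomp hlift y); apply/hJ; apply: ig_sum => b _; exact/hJ.
Qed.
End Main.

Theorem mainTheorem10 (p : nat) (K : fieldType) (n : nat)
  (hp : prime p) (hchar : p \in [pchar K]) (hF : F_finite K p)
  (I : {mpoly K[n]} -> Prop) (hI : squarefree_monomial_ideal I)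
  (R : comPzRingType) (pi : {rmorphism {mpoly K[n]} -> R})
  (hsurj : forall r : R, exists f, pi f = r)
  (hker : forall f, pi f = 0 <-> I f)
  (J : R -> Prop) (hJ : monomial_ideal_of pi J) :
  (forall e : nat, monomial_ideal_of pi (J_e p J e)) /\
  monomial_ideal_of pi (cartier_core p J).
Proof.
have hp0 := prime_gt0 hp.
have [M0 [_ hIgen]] := hI.
have HC : forall a h, pi h = 0 -> pi (Cm a h) = 0.
  move=> a h /hker /hIgen [k [r [g [H ->]]]]; apply/hker/hIgen.
  rewrite (big_morph _ (@CmD K n a) (@Cm0 K n a)); apply: ig_sum => i _.
  have [m [Mm ->]] := H i; rewrite CmMX; case: ifP => _; last exact: ig0.
  by apply: igG; exists m.
pose lift r := proj1_sig (constructive_indefinite_description _ (hsurj r)).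
have hlift : forall r, pi (lift r) = r :=
  fun r => proj2_sig (constructive_indefinite_description _ (hsurj r)).
have [MJ hJ'] := hJ.
have hS : forall e, [pchar {mpoly K[n]}].-nat (p ^ e)%N.
  by move=> e; rewrite (eq_pnat _ (pchar_lalg _)) pnatX pnatE // hchar.
have Je_props : forall e,
  [/\ J_e p J e 0,
      (forall x y, J_e p J e x -> J_e p J e y -> J_e p J e (x + y)),
      (forall r x, J_e p J e x -> J_e p J e (r * x)) &
      (forall a x, J_e p J e x -> J_e p J e (P pi lift a x))].
  move=> e; split.
  - by move=> phi hphi; rewrite (pel0 hphi); exact: (J0 hJ').
  - move=> x y Hx Hy phi hphi; case: (hphi) => hD _; rewrite hD.
    exact: (JD hJ' (Hx _ hphi) (Hy _ hphi)).
  - move=> r x Hx phi [hD hL]; apply: (Hx (fun s => phi (r * s))).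
    split => [u v|u v]; first by rewrite mulrDr hD.
    by rewrite mulrCA hL.
  - move=> a x Hx phi hphi; apply: (J_comp hlift hJ') => b.
    rewrite -(P_psi_diag HC hlift hphi hp0 (hS e) a b x).
    apply: (JP HC hlift hJ'); apply: Hx; exact: psi_linear.
split.
  move=> e; have [h0 hD hM hP] := Je_props e.
  exact: (generic_mon hlift h0 hD hM hP).
apply: (generic_mon hlift).
- by move=> s; have [h0 _ _ _] := Je_props s.
- by move=> x y Hx Hy s; have [_ hD _ _] := Je_props s; apply: hD.
- by move=> r x Hx s; have [_ _ hM _] := Je_props s; apply: hM.
- by move=> a x Hx s; have [_ _ _ hP] := Je_props s; apply: hP.
Qed.
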